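(* Let $A$ be an MV-algebra and $d$ an isotone $(\odot,\vee)$-derivation on $A$ with $d(1)\in\mathbf{B}(A)$. Then $d\circ d=d$.
   Context: An MV-algebra is an algebra $(A,\oplus,{}^*,0)$ of type $(2,1,0)$ satisfying: $x\oplus(y\oplus z)=(x\oplus y)\oplus z$, $x\oplus y=y\oplus x$, $x\oplus 0=x$, $x^{**}=x$, $x\oplus 0^*=0^*$, $(x^*\oplus y)^*\oplus y=(y^*\oplus x)^*\oplus x$. Put $1=0^*$ and $x\odot y=(x^*\oplus y^* )^*$. The natural order is $x\le y$ iff $x^*\oplus y=1$, with lattice operations $x\vee y=(x\odot y^* )\oplus y$, $x\wedge y=x\odot(x^*\oplus y)$. The Boolean center is $\mathbf{B}(A)=\{x\in A: x\oplus x=x\}$. A $(\odot,\vee)$-derivation on $A$ is a map $d:A\to A$ with $d(x\odot y)=(d(x)\odot y)\vee(x\odot d(y))$ for all $x,y\in A$; it is isotone if $x\le y$ implies $d(x)\le d(y)$. *)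

(* Defs.v *)
Record MVAlgebra := {
  mv_car :> Type;
  mv_oplus : mv_car -> mv_car -> mv_car;
  mv_neg : mv_car -> mv_car;
  mv_zero : mv_car;
  mv_assoc : forall x y z, mv_oplus x (mv_oplus y z) = mv_oplus (mv_oplus x y) z;
  mv_comm : forall x y, mv_oplus x y = mv_oplus y x;
  mv_zero_r : forall x, mv_oplus x mv_zero = x;
  mv_negneg : forall x, mv_neg (mv_neg x) = x;
  mv_one_abs : forall x, mv_oplus x (mv_neg mv_zero) = mv_neg mv_zero;
  mv_luk : forall x y,
    mv_oplus (mv_neg (mv_oplus (mv_neg x) y)) y
    = mv_oplus (mv_neg (mv_oplus (mv_neg y) x)) x
}.

Section MVOps.
Variable A : MVAlgebra.

Definition mv_one : A := mv_neg A (mv_zero A).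
Definition mv_odot (x y : A) : A :=
  mv_neg A (mv_oplus A (mv_neg A x) (mv_neg A y)).
Definition mv_le (x y : A) : Prop := mv_oplus A (mv_neg A x) y = mv_one.
Definition mv_join (x y : A) : A := mv_oplus A (mv_odot x (mv_neg A y)) y.
Definition mv_meet (x y : A) : A := mv_odot x (mv_oplus A (mv_neg A x) y).

Definition mv_boolean (x : A) : Prop := mv_oplus A x x = x.

Definition odot_join_derivation (d : A -> A) : Prop :=
  forall x y, d (mv_odot x y) = mv_join (mv_odot (d x) y) (mv_odot x (d y)).

Definition isotone (d : A -> A) : Prop :=
  forall x y, mv_le x y -> mv_le (d x) (d y).
End MVOps.

Arguments mv_one {A}.
Arguments mv_odot {A}.
Arguments mv_le {A}.
Arguments mv_join {A}.
Arguments mv_meet {A}.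
Arguments mv_boolean {A}.
Arguments odot_join_derivation {A}.
Arguments isotone {A}.

(* Main.v *)
Require Import Defs.

Local Notation "x +' y" := (mv_oplus _ x y) (at level 50, left associativity).
Local Notation "x ^*" := (mv_neg _ x) (at level 2, left associativity).

Lemma one_neg (A : MVAlgebra) : (@mv_one A)^* = mv_zero A.
Proof. unfold mv_one; apply mv_negneg. Qed.

Lemma zero_l (A : MVAlgebra) (x : A) : mv_zero A +' x = x.
Proof. rewrite mv_comm; apply mv_zero_r. Qed.

Lemma one_r (A : MVAlgebra) (x : A) : x +' mv_one = mv_one.
Proof. apply mv_one_abs. Qed.

Lemma compl (A : MVAlgebra) (x : A) : x^* +' x = mv_one.
Proof.
  pose proof (mv_luk A x mv_one) as H.
  rewrite one_r, one_neg, zero_l in H. auto.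
Qed.

Lemma compl' (A : MVAlgebra) (x : A) : x +' x^* = mv_one.
Proof. rewrite mv_comm; apply compl. Qed.

Lemma odot_compl (A : MVAlgebra) (x : A) : mv_odot x (x^*) = mv_zero A.
Proof. unfold mv_odot. rewrite mv_negneg, compl. apply one_neg. Qed.

Lemma odot_comm (A : MVAlgebra) (x y : A) : mv_odot x y = mv_odot y x.
Proof. unfold mv_odot. rewrite mv_comm; reflexivity. Qed.

Lemma odot_assoc (A : MVAlgebra) (x y z : A) :
  mv_odot (mv_odot x y) z = mv_odot x (mv_odot y z).
Proof. unfold mv_odot. rewrite !mv_negneg, mv_assoc; reflexivity. Qed.

Lemma odot_zero_l (A : MVAlgebra) (x : A) : mv_odot (mv_zero A) x = mv_zero A.
Proof.
  unfold mv_odot. change (mv_neg A (mv_zero A)) with (@mv_one A).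
  rewrite mv_comm, one_r. apply one_neg.
Qed.

Lemma odot_zero_r (A : MVAlgebra) (x : A) : mv_odot x (mv_zero A) = mv_zero A.
Proof. rewrite odot_comm; apply odot_zero_l. Qed.

Lemma odot_one_r (A : MVAlgebra) (x : A) : mv_odot x mv_one = x.
Proof. unfold mv_odot. rewrite one_neg, mv_zero_r, mv_negneg; reflexivity. Qed.

Lemma sum_zero (A : MVAlgebra) (u v : A) : u +' v = mv_zero A -> v = mv_zero A.
Proof.
  intro H.
  assert (v^* = mv_one).
  { rewrite <- (mv_zero_r A (v^*)), <- H, (mv_comm _ u v), mv_assoc, compl.
    rewrite mv_comm; apply one_r. }
  rewrite <- (mv_negneg A v), H0. apply one_neg.
Qed.

Lemma join_unfold (A : MVAlgebra) (x y : A) :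
  mv_join x y = (x^* +' y)^* +' y.
Proof. unfold mv_join, mv_odot. rewrite mv_negneg; reflexivity. Qed.

Lemma join_comm (A : MVAlgebra) (x y : A) : mv_join x y = mv_join y x.
Proof. rewrite !join_unfold. apply mv_luk. Qed.

Lemma le_join (A : MVAlgebra) (x y : A) : mv_le x y -> mv_join x y = y.
Proof.
  unfold mv_le; intro H. rewrite join_unfold, H, one_neg. apply zero_l.
Qed.

Lemma antisym (A : MVAlgebra) (x y : A) : mv_le x y -> mv_le y x -> x = y.
Proof.
  intros H1 H2. rewrite <- (le_join _ _ _ H1), join_comm. symmetry; apply le_join; auto.
Qed.

Lemma meet_comm (A : MVAlgebra) (a b : A) :
  mv_odot a (a^* +' b) = mv_odot b (b^* +' a).
Proof.
  unfold mv_odot.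
  pose proof (mv_luk A (b^*) (a^*)) as H. rewrite !mv_negneg in H.
  rewrite (mv_comm _ (a^*) b), (mv_comm _ (b^*) a).
  rewrite (mv_comm _ (a^*)), (mv_comm _ (b^*)), H. reflexivity.
Qed.

Lemma bool_odot (A : MVAlgebra) (b : A) : b +' b = b -> mv_odot b b = b.
Proof.
  intro Hb. apply antisym.
  - unfold mv_le, mv_odot. rewrite mv_negneg, <- mv_assoc, compl.
    apply one_r.
  - pose proof (meet_comm A b (b^*)) as H.
    rewrite mv_negneg, Hb in H.
    rewrite (odot_comm A (b^*) b), odot_compl in H.
    unfold mv_le. unfold mv_odot in H |- *.
    rewrite <- (mv_negneg A (b^* +' _)), H. reflexivity.
Qed.

Lemma le_odot (A : MVAlgebra) (a b : A) :
  mv_le a b -> b +' b = b -> mv_odot a b = a.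
Proof.
  intros H Hb.
  assert (Ha : a = mv_odot b (b^* +' a)).
  { rewrite <- meet_comm. unfold mv_le in H. rewrite H, odot_one_r. reflexivity. }
  transitivity (mv_odot (mv_odot b (b^* +' a)) b). { f_equal; exact Ha. }
  rewrite odot_comm, <- odot_assoc, bool_odot by auto.
  symmetry; exact Ha.
Qed.

Theorem corollary3p23 (A : MVAlgebra) (d : A -> A) :
  odot_join_derivation d -> isotone d -> mv_boolean (d mv_one) ->
  forall x : A, d (d x) = d x.
Proof.
  intros Hd Hi Hb x.
  assert (d0 : d (mv_zero A) = mv_zero A).
  { pose proof (Hd (mv_zero A) (mv_zero A)) as H.
    rewrite odot_zero_r, odot_zero_r, odot_zero_l in H.
    rewrite H, join_unfold, mv_zero_r, mv_zero_r. apply one_neg. }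
  assert (dle : forall u, mv_le (d u) u).
  { intro u. pose proof (Hd u (u^*)) as H.
    rewrite odot_compl, d0 in H.
    rewrite join_comm in H.
    unfold mv_join in H. symmetry in H. apply sum_zero in H.
    unfold mv_odot in H. rewrite mv_negneg in H.
    unfold mv_le. rewrite <- (mv_negneg A (_ +' _)), H. reflexivity. }
  assert (yle : mv_le (d x) (d mv_one)).
  { apply Hi. unfold mv_le. apply one_r. }
  pose proof (Hd (d x) mv_one) as H.
  rewrite !odot_one_r in H.
  rewrite (le_odot _ _ _ yle Hb) in H.
  rewrite H. apply le_join. apply dle.
Qed.
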